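(* Let $\varphi\in C^\infty_c(\mathbb R)$ satisfy $$\sum_{k=1}^\infty\frac{\|D^k\varphi\|_{L^2(\mathbb R)}^2}{k^2}<+\infty.$$ Then $\varphi\equiv0$. Consequently, with $N=1$, $\sigma_s$ the normalized surface measure on $\mathbb S^0$, and $\mu^+=\sum_{k=1}^\infty\delta_k/k^2$, for every open set $\Omega\subset\mathbb R$ the space $\mathcal X(\Omega)$ equals $\{0\}$.
   Context: $D^k$ is the $k$-th derivative and $\delta_k$ the Dirac mass at $k$. In the setting of the consequence, for $s=k\in\mathbb N$ the energy $\mathcal E_{2s_1,s}(u,u)$ (with $s_1=k+1$) equals $\|D^ku\|^2_{L^2(\mathbb R)}$, so that for this $\mu^+$, $\mathcal X(\Omega)$ is the closure of $\{u\in C^\infty_c(\Omega):\sum_{k\ge1}\|D^ku\|^2_{L^2}/k^2<\infty\}$ in the norm $(\|u\|^2_{L^2}+\sum_{k\ge1}\|D^ku\|^2_{L^2}/k^2)^{1/2}$. *)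

(* Defs.v *)
From HB Require Import structures.
From mathcomp Require Import all_boot all_order all_algebra.
From mathcomp Require Import all_classical all_reals all_analysis.
Set Implicit Arguments. Unset Strict Implicit. Unset Printing Implicit Defensive.
Import Order.TTheory GRing.Theory Num.Theory.
Import numFieldNormedType.Exports.
Local Open Scope classical_set_scope.
Local Open Scope ring_scope.

Section Defs.
Variable R : realType.

Definition Dk (k : nat) (f : R -> R) : R -> R := derive1n k f.

Definition smooth (f : R -> R) : Prop :=
  forall (k : nat) (x : R), derivable (Dk k f) x 1.

Definition supp (f : R -> R) : set R := closure [set x | f x != 0].

(** f in C^infinity_c(Omega) (extended by zero to R) *)
Definition Cc_inf (Omega : set R) (f : R -> R) : Prop :=
  smooth f /\ compact (supp f) /\ supp f `<=` Omega.

Definition L2sq (f : R -> R) : \bar R :=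
  (\int[lebesgue_measure]_(x in [set: R]) ((f x) ^+ 2)%:E)%E.

Definition Dsum (f : R -> R) : \bar R :=
  (\sum_(1 <= k <oo) (L2sq (Dk k f) * ((k%:R ^+ 2)^-1)%:E))%E.

Definition Xnorm2 (f : R -> R) : \bar R := (L2sq f + Dsum f)%E.

Definition X0 (Omega : set R) : set (R -> R) :=
  [set u | Cc_inf Omega u /\ (Dsum u < +oo)%E].

(** X(Omega): closure of X0(Omega) in the X-norm, realised concretely as
    a space of (measurable) functions on R: u belongs to X(Omega) iff it is
    the L^2 limit of a sequence of X0(Omega) which is Cauchy in the X-norm
    (the X-norm dominates the L^2 norm, so the completion embeds in L^2). *)
Definition Xsp (Omega : set R) : set (R -> R) :=
  [set u : R -> R | measurable_fun [set: R] u /\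
    exists v : nat -> R -> R,
      (forall n, X0 Omega (v n)) /\
      (forall e : R, 0 < e -> exists N : nat, forall m n : nat,
          (N <= m)%N -> (N <= n)%N -> (Xnorm2 (fun x => (v m x - v n x)%R) < e%:E)%E) /\
      (L2sq (fun x => (v n x - u x)%R) @[n --> \oo] --> 0%E)].

End Defs.

(* Main.v *)
Require Import Defs.
From HB Require Import structures.
From mathcomp Require Import all_boot all_order all_algebra.
From mathcomp Require Import all_classical all_reals all_analysis.
From mathcomp Require Import measurable_realfun.
From mathcomp Require Import ring lra zify.
Import Order.TTheory GRing.Theory Num.Theory.
Import numFieldNormedType.Exports.
Local Open Scope classical_set_scope.
Local Open Scope ring_scope.

Section NatL.
Local Open Scope nat_scope.
Lemma cube n : n.+1 ^ 3 <= 8 ^ n.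
Proof.
elim: n => [|n IH] //.

have : n.+2 ^ 3 <= 8 * n.+1 ^ 3.
  rewrite !expnS expn0; nia.
move=> h; apply: (leq_trans h); by rewrite [8 ^ _]expnS leq_mul2l IH orbT.
Qed.
Lemma natineq k n : (k + n).+1 ^ 2 * n.+1 <= k.+1 ^ 2 * 8 ^ n.
Proof.
have h1 : (k + n).+1 <= k.+1 * n.+1 by nia.
have h2 : (k+n).+1 ^ 2 <= k.+1 ^ 2 * n.+1 ^ 2.
  by rewrite -expnMn leq_exp2r.
have h3 : (k + n).+1 ^ 2 * n.+1 <= k.+1 ^ 2 * n.+1 ^ 2 * n.+1.
  by rewrite leq_mul2r h2 orbT.
apply: (leq_trans h3).
have -> : k.+1 ^ 2 * n.+1 ^ 2 * n.+1 = k.+1 ^ 2 * n.+1 ^ 3.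
  by rewrite -mulnA -expnSr.
by rewrite leq_mul2l cube orbT.
Qed.
End NatL.

Section P1.
Variables (R : realType) (phi : R -> R).
Hypothesis hs : smooth phi.

Local Notation f k := (Dk k phi).

Lemma fS k : f k.+1 = derive1 (f k).
Proof. by rewrite /Dk derive1nS. Qed.

Lemma f_cont k : continuous (f k).
Proof. move=> x; apply: differentiable_continuous; apply/derivable1_diffP; exact: hs. Qed.

Lemma f_isder k (x : R) : is_derive x (1:R) (f k) (f k.+1 x).
Proof. rewrite fS derive1E; exact: derivableP (hs k x). Qed.

Lemma supp_bound : compact (supp phi) ->
  exists M : R, 0 < M /\ forall x, M < `|x| -> phi x = 0.
Proof.
move=> /compact_bounded [M [Mr HM]].
exists (`|M| + 1); split; first by rewrite ltr_wpDl.
move=> x hx; apply/eqP; apply/negPn/negP => hx0.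
have : `|x| <= `|M| + 1.
  apply: (HM (`|M| + 1)).
    by rewrite (le_lt_trans (ler_norm M)) // ltrDl.
  by apply: subset_closure.
by rewrite leNgt hx.
Qed.

Lemma zero_out M : (forall x, M < `|x| -> phi x = 0) ->
  forall k x, M < `|x| -> f k x = 0.
Proof.
move=> H0; elim=> [|k IH] x hx; first exact: H0.
rewrite fS derive1E.
have : \forall y \near x, f k y = (fun=> 0) y.
  have : \forall y \near x, M < `|y|.
    apply: (@cvgr_gt R R (nbhs x) _ (fun y : R => `|y|) `|x| _ M hx).
    exact: norm_continuous.
  by apply: filterS => y /IH.
move/near_eq_derive => ->.
by rewrite derive_val.
Qed.


Lemma dsum_bound : (Dsum phi < +oo)%E ->
  exists B : R, 0 <= B /\ forall k, (L2sq (f k.+1) <= (B * (k.+1)%:R ^+ 2)%:E)%E.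
Proof.
move=> hD.
pose t := fun k : nat => (L2sq (f k) * ((k%:R ^+ 2 : R)^-1)%:E)%E.
have t0 : forall k, (0 <= t k)%E.
  move=> k; apply: mule_ge0.
    by apply: integral_ge0 => y _; rewrite lee_fin sqr_ge0.
  by rewrite lee_fin invr_ge0 sqr_ge0.
have D0 : (0 <= Dsum phi)%E by apply: nneseries_ge0 => n _ _; exact: t0.
have Dfin : Dsum phi \is a fin_num by rewrite ge0_fin_numE.
exists (fine (Dsum phi)); split; first by rewrite fine_ge0.
move=> k.
have tle : (t k.+1 <= Dsum phi)%E.
  apply: le_trans (@nneseries_lim_ge R t xpredT 1 k.+2 _); last by move=> n _ _; exact: t0.
  rewrite big_nat_recr //=; apply: lee_paddl => //.
  by apply: sume_ge0 => i _; exact: t0.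
have -> : L2sq (f k.+1) = (t k.+1 * ((k.+1)%:R ^+ 2)%:E)%E.
  rewrite /t -muleA -EFinM mulVf ?mule1 //.
rewrite [X in (_ <= X)%E]EFinM fineK //.
by apply: lee_wpmul2r => //; rewrite lee_fin sqr_ge0.
Qed.


Lemma meas_cont (g : R -> R) (D : set R) : continuous g -> measurable_fun D g.
Proof.
move=> cg; apply: (measurable_funS measurableT (@subsetT _ D)).
exact: continuous_measurable_fun.
Qed.

Lemma sup_bound M B : 0 < M -> 0 <= B ->
  (forall k x, M < `|x| -> f k x = 0) ->
  (forall k, (L2sq (f k.+1) <= (B * (k.+1)%:R ^+ 2)%:E)%E) ->
  forall k x, `|f k x| <= (2 * (M + 1) + B) * (k.+1)%:R ^+ 2.
Proof.
move=> M0 B0 Hz HB k x.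
have kk : 1 <= (k.+1)%:R ^+ 2 :> R by rewrite expr_ge1 // ler1n.
suff : `|f k x| <= 2 * (M + 1) + B * (k.+1)%:R ^+ 2.
  move/le_trans; apply; rewrite mulrDl; nra.
case: (ltrP M `|x|) => hx.
  rewrite Hz // normr0; apply: addr_ge0; first lra.
  by apply: mulr_ge0 => //; lra.
pose a := - (M + 1).
have ax : a < x.
  move: hx; rewrite ler_norml /a; lra.
have fa : f k a = 0 by apply: Hz; rewrite /a normrN ger0_norm; lra.
have FTC : (\int[lebesgue_measure]_(t in `[a, x]) (f k.+1 t)%:E = (f k x)%:E - (f k a)%:E)%E.
  apply: continuous_FTC2 => //.
  - exact: continuous_subspaceT (f_cont k.+1).
  - split.
    + by move=> y _; exact: hs.
    + exact: cvg_at_right_filter (f_cont k a).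
    + exact: cvg_at_left_filter (f_cont k x).
rewrite fa sube0 in FTC.
have mg : measurable_fun `[a, x] (f k.+1) by apply: meas_cont; exact: f_cont.
suff : ((`|f k x|)%:E <= (2 * (M + 1) + B * (k.+1)%:R ^+ 2)%:E)%E by move=> h; move: h; rewrite lee_fin.
apply: (le_trans (y := (\int[lebesgue_measure]_(t in `[a, x]) `|(f k.+1 t)%:E|)%E)).
  rewrite -abse_EFin -FTC; apply: le_abse_integral => //.
  by apply/measurable_EFinP.
have -> : (fun t => `|(f k.+1 t)%:E|%E) = (fun t => (`|f k.+1 t|)%:E).
  by apply/funext => t; rewrite abse_EFin.
apply: (le_trans (y := (\int[lebesgue_measure]_(t in `[a, x]) ((1 + f k.+1 t ^+ 2)%:E))%E)).
  apply: ge0_le_integral => //.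
  - by apply/measurable_EFinP; apply: measurableT_comp => //; exact: normr_measurable.
  - apply/measurable_EFinP; apply: measurable_funD => //; exact: measurable_funX.
  - move=> t _; rewrite lee_fin.
    by case: (lerP 0 (f k.+1 t)) => h; [rewrite ger0_norm | rewrite ltr0_norm]; nra.
under eq_integral do rewrite EFinD.
rewrite ge0_integralD //.
- rewrite EFinD; apply: leeD.
    rewrite integral_cst // mul1e.
    have hm := lebesgue_measure_itv `[a, x]; rewrite /= lte_fin ax in hm.
    rewrite [X in (X <= _)%E](_ : _ = (x%:E - a%:E)%E); last exact: hm.
    rewrite lee_fin; move: hx; rewrite ler_norml /a; lra.
  apply: le_trans (HB k).
  apply: ge0_subset_integral => //.
  + apply/measurable_EFinP; apply: measurable_funX; apply: meas_cont; exact: f_cont.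
  + by move=> t _; rewrite lee_fin sqr_ge0.
- by move=> t _; rewrite lee_fin sqr_ge0.
- by apply/measurable_EFinP; apply: measurable_funX.
Qed.


Lemma shift_step c C : 0 <= C ->
  (forall k t, t <= c -> f k t = 0) ->
  (forall k t, `|f k t| <= C * (k.+1)%:R ^+ 2) ->
  forall n k x, c <= x -> `|f k x| <= C * ((k + n).+1)%:R ^+ 2 * (x - c) ^+ n.
Proof.
move=> C0 Hc HC; elim=> [|n IH] k x cx.
  by rewrite addn0 expr0 mulr1.
case: (ltrP c x) => [cx'|xc]; last first.
  have -> : x = c by apply/le_anti; rewrite xc cx.
  by rewrite Hc // normr0 subrr expr0n /= mulr0.
have [xi xiI] := MVT cx' (fun y _ => f_isder k y) (continuous_subspaceT (f_cont k)).
rewrite (Hc k c) // subr0 => e.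
move: xiI; rewrite in_itv /= => /andP[cxi xix].
have hb := IH k.+1 xi (ltW cxi).
rewrite addSnnS in hb.
have d0 : 0 <= x - c by rewrite subr_ge0 ltW.
rewrite e normrM (ger0_norm d0) [(x - c) ^+ n.+1]exprSr.
have hP : (xi - c) ^+ n <= (x - c) ^+ n.
  by apply: lerXn2r; rewrite ?nnegrE ?subr_ge0 ?ltW // ltrD2r.
apply: (le_trans (ler_wpM2r d0 hb)).
rewrite !mulrA.
apply: ler_wpM2r => //.
apply: ler_wpM2l => //.
by rewrite !mulr_ge0.
Qed.

Lemma kill (y K : R) : 0 <= y -> (forall n : nat, y * (n.+1)%:R <= K) -> y = 0.
Proof.
move=> y0 H.
case: (lerP y 0) => [h|ypos]; first by apply/le_anti; rewrite h y0.
have h1 := truncnS_gt (K / y).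
rewrite ltr_pdivrMr // in h1.
have h2 := H (Num.Def.trunc (K / y)).
nra.
Qed.

Lemma step_zero c C : 0 <= C ->
  (forall k t, t <= c -> f k t = 0) ->
  (forall k t, `|f k t| <= C * (k.+1)%:R ^+ 2) ->
  forall k t, t <= c + 8^-1 -> f k t = 0.
Proof.
move=> C0 Hc HC k x hx.
case: (lerP x c) => [xc|cx]; first exact: Hc.
apply/normr0_eq0/(@kill _ (C * (k.+1)%:R ^+ 2)) => // n.
have hb := @shift_step c C C0 Hc HC n k x (ltW cx).
set y := `|f k x| in hb *.
set d := (x - c) ^+ n in hb.
have d0 : 0 <= d by rewrite exprn_ge0 // subr_ge0 ltW.
have de : d * 8%:R ^+ n <= 1.
  rewrite -exprMn exprn_ile1 //.
    by rewrite mulr_ge0 // subr_ge0 ltW.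
  lra.
have hnat : (((k + n).+1)%:R ^+ 2 * (n.+1)%:R <= (k.+1)%:R ^+ 2 * 8%:R ^+ n :> R).
  by rewrite -!natrX -!natrM ler_nat; exact: natineq.
apply: (le_trans (ler_wpM2r (ler0n _ _) hb)).
rewrite (_ : C * _ * d * _ = C * d * (((k + n).+1)%:R ^+ 2 * (n.+1)%:R)); last by ring.
apply: (le_trans (ler_wpM2l (mulr_ge0 C0 d0) hnat)).
rewrite (_ : C * d * _ = C * (k.+1)%:R ^+ 2 * (d * 8%:R ^+ n)); last by ring.
by rewrite ler_piMr // mulr_ge0 // exprn_ge0.
Qed.

Lemma part1 : compact (supp phi) -> (Dsum phi < +oo)%E -> phi = (fun _ => 0).
Proof.
move=> hc hD.
have [M [M0 HM]] := supp_bound hc.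
have Hz := @zero_out M HM.
have [B [B0 HB]] := dsum_bound hD.
have HC := @sup_bound M B M0 B0 Hz HB.
set C := 2 * (M + 1) + B in HC.
have C0 : 0 <= C by rewrite /C; lra.
pose a := - (M + 1).
have Hm : forall m k t, t <= a + m%:R * 8^-1 -> f k t = 0.
  elim=> [|m IH].
    move=> k t; rewrite mul0r addr0 => ht; apply: Hz.
    by move: ht; rewrite /a => ht; rewrite ltr_normr; lra.
  move=> k t ht; apply: (@step_zero _ C C0 IH HC).
  by move: ht; rewrite -addn1 natrD mulrDl mul1r addrA.
apply/funext => x.
have h1 := truncnS_gt (8 * (x - a)).
apply: (Hm (Num.Def.trunc (8 * (x - a))).+1 0%N x).
lra.
Qed.

End P1.

Section P2.
Variable R : realType.

Lemma L2sq_ae0 (u : R -> R) : measurable_fun [set: R] u ->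
  (L2sq u = 0%E <-> {ae (@lebesgue_measure R), forall x, u x = 0}).
Proof.
move=> mu.
have mu2 : measurable_fun [set: R] (EFin \o (fun x => u x ^+ 2)).
  by apply/measurable_EFinP; apply: measurable_funX.
have := ae_eq_integral_abs (@lebesgue_measure R) (measurableT) mu2.
have -> : (fun x : R => `|(EFin \o (fun y => (u y ^+ 2)%R)) x|%E) = (fun x : R => (u x ^+ 2)%:E).
  by apply/funext => x; rewrite gee0_abs // lee_fin sqr_ge0.
rewrite /L2sq => ->; split.
- apply: (@filterS _ _ (ae_filter_ringOfSetsType lebesgue_measure)) => x /(_ I) [] /eqP; rewrite sqrf_eq0 => /eqP.
  done.
- move=> H; apply: (@filterS _ _ (ae_filter_ringOfSetsType lebesgue_measure)) H => x ux _ /=; by rewrite ux expr0n.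
Qed.

Lemma smooth0 : smooth (fun _ : R => 0).
Proof.
have D0 : forall k, Dk k (fun _ : R => 0) = (fun _ => 0).
  elim=> [|k IH]; first by [].
  rewrite /Dk derive1nS -/(Dk k _) IH.
  by apply/funext => x; rewrite derive1E derive_val.
by move=> k x; rewrite D0; exact: derivable_cst.
Qed.


Lemma Dk0 k : Dk k (fun _ : R => 0) = (fun _ => 0).
Proof.
elim: k => [|k IH]; first by [].
rewrite /Dk derive1nS -/(Dk k _) IH.
by apply/funext => x; rewrite derive1E derive_val.
Qed.

Lemma L2sq0 : L2sq (fun _ : R => 0) = 0%E.
Proof. by rewrite /L2sq expr0n /= integral0. Qed.

Lemma Dsum0 : Dsum (fun _ : R => 0) = 0%E.
Proof.
rewrite /Dsum.
by rewrite eseries0 // => i _ _; rewrite Dk0 L2sq0 mul0e.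
Qed.

Lemma X0_0 Omega : X0 Omega (fun _ : R => 0).
Proof.
split; last by rewrite Dsum0.
split; first exact: smooth0.
have -> : supp (fun _ : R => 0) = set0.
  by rewrite /supp (_ : [set x | 0 != 0] = set0) ?closure0 //; apply/seteqP; split => x //=; rewrite eqxx.
by split; [exact: compact0 | by []].
Qed.

Lemma L2sqN (u : R -> R) : L2sq (fun x => 0 - u x) = L2sq u.
Proof. by rewrite /L2sq; under eq_fun do rewrite sub0r sqrrN. Qed.

Lemma part2 (P1 : forall phi : R -> R, Cc_inf [set: R] phi -> (Dsum phi < +oo)%E ->
     phi = (fun _ => 0)) Omega (u : R -> R) :
  Xsp Omega u <-> (measurable_fun [set: R] u /\
        {ae (@lebesgue_measure R), forall x, u x = 0}).
Proof.
split.
- move=> [mu [v [hv [_ hl]]]]; split => //.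
  apply: (proj1 (@L2sq_ae0 u mu)).
  have v0 : forall n, v n = (fun _ => 0).
    move=> n; have [[hs [hc _]] hd] := hv n; apply: P1 => //.
  have e : (fun n => L2sq (fun x => v n x - u x)) = fun _ => L2sq u.
    by apply/funext => n; rewrite v0 L2sqN.
  have : (fun _ : nat => L2sq u) @ \oo --> 0%E by rewrite -e.
  by move/cvg_lim => H; rewrite -H ?lim_cst //; exact: ereal_hausdorff.
- move=> [mu hae]; split => //; exists (fun _ _ => 0); split; first by move=> n; exact: X0_0.
  split.
  + move=> e e0; exists 0%N => m n _ _.
    by rewrite /Xnorm2 subr0 L2sq0 Dsum0 adde0 lte_fin.
  + rewrite L2sqN (proj2 (@L2sq_ae0 u mu) hae); exact: cvg_cst.
Qed.
End P2.


Theorem theorem5p3 (R : realType) :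
  (forall phi : R -> R, Cc_inf [set: R] phi -> (Dsum phi < +oo)%E ->
     phi = (fun _ => 0)) /\
  (forall Omega : set R, open Omega ->
     forall u : R -> R, Xsp Omega u <->
       (measurable_fun [set: R] u /\
        {ae (@lebesgue_measure R), forall x, u x = 0})).
Proof.
split.
- by move=> phi [hs [hc _]] hD; exact: (@part1 R phi hs hc hD).
- move=> Omega _ u; apply: part2 => phi [hs [hc _]] hD; exact: (@part1 R phi hs hc hD).
Qed.
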